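(* Let $C\in\mathcal{P}(n,d)$ with $\mathrm{st}(C)=\{j_1<\cdots<j_\ell\}$. Then $\ell\le d\le n-\ell$ and $j_k\ge 2k$ for all $1\le k\le\ell$.
   Context: $\mathcal{P}(n,d)$ is the set of words $C=C_1\cdots C_n$ in letters $\mathbf{e}$ (east step) and $\mathbf{n}$ (north step) with exactly $d$ letters $\mathbf{e}$. Scan positions left to right and mark position $i$ with $C_i=\mathbf{e}$ if the number of $j<i$ with $C_j=\mathbf{n}$ equals the number of $j<i$ with $C_j=\mathbf{e}$ that are unmarked; $\mathrm{st}(C)$ is the set of unmarked positions $i$ with $C_i=\mathbf{e}$. *)

(* Defs.v *)
From mathcomp Require Import all_boot.
Set Implicit Arguments. Unset Strict Implicit. Unset Printing Implicit Defensive.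

(* A word C in letters e / n is a [seq bool]: [true] = east step e,
   [false] = north step n.  Positions are 1-indexed: C_i = nth false C (i-1). *)
Definition is_e (b : bool) : bool := b.

Definition inP (n d : nat) (C : seq bool) : bool :=
  (size C == n) && (count is_e C == d).

(* Accumulator: (#n seen so far, #unmarked e seen so far). Position i with C_i = e is
   marked iff #{j<i : C_j = n} = #{j<i : C_j = e, j unmarked}. *)
Fixpoint marks_aux (nn ue : nat) (C : seq bool) : seq bool :=
  match C with
  | [::] => [::]
  | c :: C' =>
      if c then
        if nn == ue then true :: marks_aux nn ue C'
        else false :: marks_aux nn ue.+1 C'
      else false :: marks_aux nn.+1 ue C'
  end.

Definition marks (C : seq bool) : seq bool := marks_aux 0 0 C.

Definition marked (C : seq bool) (i : nat) : bool := nth false (marks C) i.-1.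

Definition st (C : seq bool) : seq nat :=
  [seq i <- iota 1 (size C) | nth false C i.-1 && ~~ marked C i].

(* Main.v *)
Require Import Defs.
From mathcomp Require Import all_boot.
From mathcomp Require Import zify.

Fixpoint stg (nn ue o : nat) (C : seq bool) : seq nat :=
  match C with
  | [::] => [::]
  | c :: C' =>
      if c then
        if nn == ue then stg nn ue o.+1 C'
        else o :: stg nn ue.+1 o.+1 C'
      else stg nn.+1 ue o.+1 C'
  end.

Lemma stg_eq C : forall nn ue o,
  [seq i <- iota o (size C) | nth false C (i - o) && ~~ nth false (marks_aux nn ue C) (i - o)]
  = stg nn ue o C.
Proof.
elim: C => [//|c C IH] nn ue o /=.
rewrite subnn /=.
have E : forall nn' ue' (b : bool),
  [seq i <- iota o.+1 (size C) | nth false (c :: C) (i - o)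
      && ~~ nth false (b :: marks_aux nn' ue' C) (i - o)]
  = stg nn' ue' o.+1 C.
  move=> nn' ue' b; rewrite -IH; apply: eq_in_filter => i.
  rewrite mem_iota => /andP [H1 H2].
  have -> : i - o = (i - o.+1).+1 by lia.
  by [].
case: c E => /= E; last by rewrite E.
case: eqP => _ /=; by rewrite E.
Qed.

Lemma st_eq C : st C = stg 0 0 1 C.
Proof.
rewrite /st /marked /marks -stg_eq; apply: eq_filter => i.
by rewrite subn1.
Qed.

Lemma stg_size1 C : forall nn ue o, size (stg nn ue o C) <= count id C.
Proof.
elim: C => [//|c C IH] nn ue o /=.
case: c => /=; last by rewrite add0n.
case: eqP => _ /=; [exact: leq_trans (IH _ _ _) (leq_addl _ _)|].
by rewrite add1n ltnS.
Qed.

Lemma stg_size2 C : forall nn ue o, ue <= nn ->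
  ue + size (stg nn ue o C) <= nn + count negb C.
Proof.
elim: C => [|c C IH] nn ue o H /=; first by lia.
case: c => /=.
  case: eqP => E /=.
    by rewrite add0n; apply: IH.
  have H' : ue.+1 <= nn by lia.
  have := IH nn ue.+1 o.+1 H'; lia.
have := IH nn.+1 ue o.+1 (leqW H); lia.
Qed.

Lemma stg_pos C : forall nn ue o k, ue <= nn -> nn + ue < o ->
  k < size (stg nn ue o C) -> 2 * (ue + k).+1 <= nth 0 (stg nn ue o C) k.
Proof.
elim: C => [|c C IH] nn ue o k H1 H2 /=; first by [].
case: c => /=.
  case: eqP => E /=.
    by apply: IH => //; lia.
  case: k => [|k] /=; first by move=> _; lia.
  move=> Hk.
  have := IH nn ue.+1 o.+1 k ltac:(lia) ltac:(lia) Hk.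
  have -> : (ue + k.+1) = (ue.+1 + k) by lia.
  by [].
by apply: IH => //; lia.
Qed.

Theorem lemma4p12 (n d : nat) (C : seq bool) :
  inP n d C ->
  let l := size (st C) in
  [/\ l <= d, d <= n - l &
      forall k, 1 <= k <= l -> 2 * k <= nth 0 (st C) k.-1].
Proof.
move=> /andP [/eqP Hn /eqP Hd] /=.
rewrite st_eq.
have Hc : count id C + count negb C = size C.
  by rewrite -(count_predC id C).
have Hd' : count id C = d by rewrite -Hd.
have S1 := stg_size1 C 0 0 1.
have S2 := stg_size2 C 0 0 1 (leqnn 0).
split.
- lia.
- lia.
- move=> k /andP [Hk1 Hk2].
  have := stg_pos C 0 0 1 k.-1 (leqnn 0) (ltnSn 0) ltac:(lia).
  have -> : (0 + k.-1).+1 = k by lia.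
  by [].
Qed.
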